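(* For positive integers $\ell,m$, let $A(\ell,m)$ be the $(\ell+m)\times(\ell+m)$ coloring matrix with entries $a_{ij}=0$ if $i,j>\ell$ and $a_{ij}=1$ otherwise. Then for all positive integers $\ell,m,n$ and $1\le i\le\ell$, $$t_{A(\ell,m)}^{(i)}(n)=\frac1n\sum_{k=1}^{n}(m-\ell)^{n-k}\ell^{k-1}\binom{n}{k}\binom{2n+k-2}{k-1};$$ for $\ell+1\le i\le\ell+m$ and $n\ge2$, $$t_{A(\ell,m)}^{(i)}(n)=\frac{1}{n-1}\sum_{k=1}^{n-1}(m-\ell)^{n-k-1}\ell^{k}\binom{n-1}{k}\binom{2n+k-2}{k-1};$$ and for $n\ge2$, $$t_{A(\ell,m)}(n)=\sum_{k=1}^{n}\frac{(2m-\ell)n-mk+(\ell-m)}{n(n-1)}(m-\ell)^{n-k-1}\ell^{k}\binom{n}{k}\binom{2n+k-2}{k-1}.$$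
   Context: A plane tree is an unlabeled rooted tree in which the children of every vertex are linearly ordered. A coloring matrix is a square matrix $A=(a_{ij})$ with entries in $\{0,1\}$. An $A$-coloring of a plane tree assigns to each vertex a color (an index of a row of $A$) such that whenever a vertex of color $j$ is a child of a vertex of color $i$, $a_{ij}=1$. Let $t_A(n)$ be the number of pairs (plane tree with $n$ vertices, $A$-coloring of it) and $t_A^{(i)}(n)$ the number of those with root color $i$. Here $0^0=1$. *)

(* Defs.v *)
From mathcomp Require Import all_boot all_order all_algebra.
Set Implicit Arguments. Unset Strict Implicit. Unset Printing Implicit Defensive.

(* A plane tree whose vertices carry colors in 'I_k: a root color together
   with the ordered list of (colored) subtrees of the root's children.
   Such an object is exactly a pair (plane tree, assignment of a color to
   each vertex). *)
Inductive ctree (k : nat) : Type := CNode of 'I_k & seq (ctree k).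

Definition croot k (t : ctree k) : 'I_k := let: CNode c _ := t in c.

Fixpoint csize k (t : ctree k) : nat :=
  let: CNode _ ts := t in (sumn (map (@csize k) ts)).+1.

(* A coloring matrix is a square 0/1 matrix, entries as booleans (1 = true).
   The coloring is an A-coloring iff for every parent of color i and child
   of color j, a_{ij} = 1. *)
Fixpoint cvalid k (A : 'M[bool]_k) (t : ctree k) : bool :=
  let: CNode c ts := t in all (fun u => A c (croot u) && cvalid A u) ts.

Definition has_card (T : Type) (P : T -> Prop) (N : nat) : Prop :=
  exists f : 'I_N -> T, injective f /\ (forall x, P x <-> exists i, f i = x).

Definition tA_is k (A : 'M[bool]_k) (n N : nat) : Prop :=
  has_card (fun t : ctree k => cvalid A t /\ csize t = n) N.

Definition tAi_is k (A : 'M[bool]_k) (i : 'I_k) (n N : nat) : Prop :=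
  has_card (fun t : ctree k => [/\ cvalid A t, csize t = n & croot t = i]) N.

(* A(l,m): colors are 0-based ('I_(l+m)); paper's color i is our i-1.
   a_{ij} = 0 iff both i,j > l (paper indexing), i.e. l <= i, l <= j here. *)
Definition Alm (l m : nat) : 'M[bool]_(l + m) :=
  \matrix_(i, j) ~~ ((l <= i) && (l <= j))%N.

(* Main.v *)
Require Import Defs.
From mathcomp Require Import all_boot all_order all_algebra.
From mathcomp Require Import ring zify.
Set Implicit Arguments. Unset Strict Implicit. Unset Printing Implicit Defensive.

Lemma hc_ext T (P Q : T -> Prop) N :
  has_card P N -> (forall x, P x <-> Q x) -> has_card Q N.
Proof.
move=> [f [fi fs]] PQ; exists f; split=> // x; split=> [/PQ /fs //|/fs /PQ //].
Qed.

Lemma hc_empty T (P : T -> Prop) : (forall x, ~ P x) -> has_card P 0.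
Proof.
move=> nP; have f : 'I_0 -> T by case.
exists f; split; first by case.
by move=> x; split=> [/nP|[[]]].
Qed.

Lemma hc_single T (P : T -> Prop) x0 : (forall x, P x <-> x = x0) -> has_card P 1.
Proof.
move=> Px; exists (fun _ => x0); split; first by move=> [[|//] ?] [[|//] ?] _; apply: val_inj.
by move=> x; split=> [/Px ->|[_ <-]]; [exists ord0|apply/Px].
Qed.

Lemma hc_union T (P Q : T -> Prop) a b :
  has_card P a -> has_card Q b -> (forall x, P x -> Q x -> False) ->
  has_card (fun x => P x \/ Q x) (a + b).
Proof.
move=> [f [fi fs]] [g [gi gs]] dis.
exists (fun i => match split i with inl j => f j | inr j => g j end); split.
  move=> i1 i2; rewrite -(splitK i1) -(splitK i2).
  case: (split i1) => j1; case: (split i2) => j2; rewrite !unsplitK => H.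
  - by rewrite (fi _ _ H).
  - exfalso; apply: (dis (f j1)); first by apply/fs; exists j1.
    by rewrite H; apply/gs; exists j2.
  - exfalso; apply: (dis (f j2)); first by apply/fs; exists j2.
    by rewrite -H; apply/gs; exists j1.
  - by rewrite (gi _ _ H).
move=> x; split.
  case=> [/fs [j <-]|/gs [j <-]].
    by exists (unsplit (inl j)); rewrite unsplitK.
  by exists (unsplit (inr j)); rewrite unsplitK.
case=> i; case: (split i) => j <-; [left; apply/fs|right; apply/gs]; by exists j.
Qed.

Lemma hc_bigU (I : eqType) (r : seq I) T (P : I -> T -> Prop) (a : I -> nat) :
  uniq r -> (forall i, i \in r -> has_card (P i) (a i)) ->
  (forall i j x, P i x -> P j x -> i = j) ->
  has_card (fun x => exists2 i, i \in r & P i x) (\sum_(i <- r) a i).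
Proof.
move=> ur hP dis; elim: r ur hP => [|i r IH] /=.
  by move=> _ _; rewrite big_nil; apply: hc_empty => x [].
move=> /andP [nir ur] hP; rewrite big_cons.
have hP' : forall j, j \in r -> has_card (P j) (a j).
  by move=> j jr; apply: hP; rewrite in_cons jr orbT.
apply: hc_ext (hc_union (hP i (mem_head _ _)) (IH ur hP') _) _.
  by move=> x Pi [j jr Pj]; move: nir; rewrite (dis _ _ _ Pi Pj) jr.
move=> x; split.
  by case=> [Pi|[j jr Pj]]; [exists i; rewrite ?mem_head|exists j; rewrite // in_cons jr orbT].
by move=> [j]; rewrite in_cons => /orP [/eqP ->|jr] Pj; [left|right; exists j].
Qed.

Lemma hc_prod T1 T2 T3 (P1 : T1 -> Prop) (P2 : T2 -> Prop) a b (G : T1 -> T2 -> T3) :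
  has_card P1 a -> has_card P2 b ->
  (forall x y x' y', G x y = G x' y' -> x = x' /\ y = y') ->
  has_card (fun z => exists x y, [/\ P1 x, P2 y & z = G x y]) (a * b).
Proof.
move=> [f1 [i1 s1]] [f2 [i2 s2]] Gi.
have -> : a * b = #|{: 'I_a * 'I_b}| by rewrite card_prod !card_ord.
exists (fun k => let p := enum_val k in G (f1 p.1) (f2 p.2)); split.
  move=> k1 k2 /Gi [/i1 e1 /i2 e2]; apply: enum_val_inj.
  by move: e1 e2; case: (enum_val k1); case: (enum_val k2) => ? ? ? ? /= -> ->.
move=> z; split.
  move=> [x [y [/s1 [j1 e1] /s2 [j2 e2] ->]]].
  by exists (enum_rank (j1, j2)); rewrite enum_rankK /= e1 e2.
move=> [k <-]; exists (f1 (enum_val k).1), (f2 (enum_val k).2); split=> //.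
  by apply/s1; eexists.
by apply/s2; eexists.
Qed.

Lemma hc_map T1 T2 (P : T1 -> Prop) N (g : T1 -> T2) :
  injective g -> has_card P N -> has_card (fun y => exists x, P x /\ y = g x) N.
Proof.
move=> gi [f [fi fs]]; exists (g \o f); split; first by move=> ? ? /gi /fi.
move=> y; split.
  by move=> [x [/fs [j <-] ->]]; exists j.
by move=> [j <-]; exists (f j); split=> //; apply/fs; exists j.
Qed.

Definition Fr k (A : 'M[bool]_k) (c : 'I_k) (n : nat) (ts : seq (ctree k)) : Prop :=
  all (fun u => A c (croot u) && cvalid A u) ts /\ sumn (map (@csize k) ts) = n.

Definition Tr k (A : 'M[bool]_k) (c : 'I_k) (n : nat) (t : ctree k) : Prop :=
  [/\ cvalid A t, csize t = n & croot t = c].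

Lemma csize_gt0 k (t : ctree k) : 0 < csize t.
Proof. by case: t. Qed.

Lemma Tr0 k (A : 'M[bool]_k) c t : ~ Tr A c 0 t.
Proof. by case=> _ e _; move: (csize_gt0 t); rewrite e. Qed.

Lemma TrS k (A : 'M[bool]_k) c n t :
  Tr A c n.+1 t <-> exists ts, Fr A c n ts /\ t = CNode c ts.
Proof.
split.
  by case: t => c' ts [/= v [e] <-]; exists ts.
by move=> [ts [[v e] ->]]; split=> //=; rewrite e.
Qed.

Lemma Fr0 k (A : 'M[bool]_k) c ts : Fr A c 0 ts <-> ts = [::].
Proof.
split; last by move=> ->.
case: ts => [//|t ts [_ /=]]; move: (csize_gt0 t); case: (csize t) => //.
Qed.

Definition AT k (A : 'M[bool]_k) (c : 'I_k) (n : nat) (t : ctree k) : Prop :=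
  A c (croot t) && cvalid A t /\ csize t = n.

Lemma FrS k (A : 'M[bool]_k) c n ts :
  Fr A c n.+1 ts <-> exists2 s, s \in index_iota 0 n.+1 &
    (exists t ts', [/\ AT A c s.+1 t, Fr A c (n - s) ts' & ts = t :: ts']).
Proof.
split.
  case: ts => [[_ //]|t ts [/= /andP [a1 a2] e]].
  have := csize_gt0 t; case et: (csize t) => [//|s] _.
  exists s; first by rewrite mem_index_iota /=; move: e; rewrite et; case => <-; apply: leq_addr.
  exists t, ts; split=> //; split=> //.
  by move: e; rewrite et; case => <-; rewrite addKn.
move=> [s]; rewrite mem_index_iota /= => sn [t [ts' [[a1 a2] [a3 a4] ->]]].
split; first by rewrite /= a1 a3.
by rewrite /= a2 a4 addSn subnKC.
Qed.

Lemma AT_union k (A : 'M[bool]_k) c n t :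
  AT A c n t <-> exists2 d, d \in index_enum 'I_k & (A c d /\ Tr A d n t).
Proof.
split.
  by move=> [/andP [a v] e]; exists (croot t); rewrite ?mem_index_enum.
by move=> [d _ [a [v e r]]]; split=> //; rewrite r a v.
Qed.

Fixpoint PQf (l m f n : nat) : nat * nat :=
  if f is f'.+1 then
    (if n is n'.+1 then
      (\sum_(s < n'.+1) (l * (PQf l m f' s).1 + m * (PQf l m f' s).2) * (PQf l m f' (n' - s)).1,
       \sum_(s < n'.+1) (l * (PQf l m f' s).1) * (PQf l m f' (n' - s)).2)
     else (1, 1))
  else (1, 1).

Definition Pn l m n := (PQf l m n n).1.
Definition Qn l m n := (PQf l m n n).2.

Lemma PQf_stable l m f1 f2 n : n <= f1 -> n <= f2 -> PQf l m f1 n = PQf l m f2 n.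
Proof.
elim: f1 f2 n => [|f1 IH] [|f2] [|n] //= h1 h2.
rewrite !ltnS in h1 h2.
have b1 : forall s : 'I_n.+1, s <= f1 by move=> s; apply: (leq_trans _ h1); rewrite -ltnS.
have b2 : forall s : 'I_n.+1, s <= f2 by move=> s; apply: (leq_trans _ h2); rewrite -ltnS.
have c1 : forall s : nat, n - s <= f1 by move=> s; apply: leq_trans (leq_subr _ _) h1.
have c2 : forall s : nat, n - s <= f2 by move=> s; apply: leq_trans (leq_subr _ _) h2.
by congr pair; apply: eq_bigr => s _; rewrite !(IH f2).
Qed.

Lemma PnS l m n : Pn l m n.+1 = \sum_(s < n.+1) (l * Pn l m s + m * Qn l m s) * Pn l m (n - s).
Proof.
rewrite /Pn /Qn /=; apply: eq_bigr => s _.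
rewrite (@PQf_stable l m n s) ?(@PQf_stable l m n (n - s)) ?leq_subr //.
by rewrite -ltnS.
Qed.

Lemma QnS l m n : Qn l m n.+1 = \sum_(s < n.+1) (l * Pn l m s) * Qn l m (n - s).
Proof.
rewrite /Pn /Qn /=; apply: eq_bigr => s _.
rewrite (@PQf_stable l m n s) ?(@PQf_stable l m n (n - s)) ?leq_subr //.
by rewrite -ltnS.
Qed.

Lemma Pn0 l m : Pn l m 0 = 1. Proof. by []. Qed.
Lemma Qn0 l m : Qn l m 0 = 1. Proof. by []. Qed.

Lemma color_sum l m (F : 'I_(l+m) -> nat) a b :
  (forall d : 'I_(l+m), d < l -> F d = a) -> (forall d : 'I_(l+m), l <= d -> F d = b) ->
  \sum_(d < l+m) F d = l * a + m * b.
Proof.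
move=> Ha Hb; rewrite big_split_ord /=.
rewrite (eq_bigr (fun _ => a)) => [|d _]; last by apply: Ha; rewrite /= ltn_ord.
rewrite [X in _ + X](eq_bigr (fun _ => b)) => [|d _]; last by apply: Hb; rewrite /= leq_addr.
by rewrite !big_const_ord !iter_addn_0 mulnC [m * _]mulnC.
Qed.

Lemma Alm_E l m (c d : 'I_(l+m)) : Alm l m c d = ~~ ((l <= c) && (l <= d)).
Proof. by rewrite /Alm mxE. Qed.

Lemma count_forest l m n (c : 'I_(l+m)) :
  has_card (Fr (Alm l m) c n) (if c < l then Pn l m n else Qn l m n).
Proof.
elim: n {-2}n (leqnn n) c => [|N IH] n hn c.
  move: hn; rewrite leqn0 => /eqP ->.
  by rewrite Pn0 Qn0 if_same; apply: (@hc_single _ _ [::]) => ts; exact: Fr0.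
case: n hn => [|n] hn.
  by rewrite Pn0 Qn0 if_same; apply: (@hc_single _ _ [::]) => ts; exact: Fr0.
have IHs : forall s (d : 'I_(l+m)), s <= n -> has_card (Fr (Alm l m) d s) (if d < l then Pn l m s else Qn l m s).
  by move=> s d hs; apply: IH; apply: leq_trans hs _.
pose cnt (d : 'I_(l+m)) s := if d < l then Pn l m s else Qn l m s.
pose a s := (\sum_(d < l+m) (if Alm l m c d then cnt d s else 0)) * cnt c (n - s).
have -> : (if c < l then Pn l m n.+1 else Qn l m n.+1) = \sum_(s <- index_iota 0 n.+1) a s.
  rewrite big_mkord /a /cnt; case: ifP => cl.
    rewrite PnS; apply: eq_bigr => s _; congr (_ * _); symmetry.
    by apply: color_sum => d dl; rewrite Alm_E (leqNgt l c) cl /= ?dl // ltnNge dl.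
  rewrite QnS; apply: eq_bigr => s _; congr (_ * _); symmetry.
  rewrite (@color_sum l m _ (Pn l m s) 0) ?muln0 ?addn0 // => d dl.
    by rewrite Alm_E (leqNgt l c) cl (leqNgt l d) dl.
  by rewrite Alm_E dl (leqNgt l c) cl.
apply: hc_ext; last by move=> ts; apply: iff_sym; exact: FrS.
apply: hc_bigU; first exact: iota_uniq.
  move=> s; rewrite mem_index_iota ltnS => sn.
  apply: hc_prod; last by move=> x y x' y' [-> ->].
  apply: hc_ext; last by move=> t; apply: iff_sym; exact: AT_union.
  apply: hc_bigU; first exact: index_enum_uniq.
    move=> d _; case: ifP => ad.
      apply: hc_ext.
        apply: (@hc_map _ _ _ _ (CNode d)); first by move=> x y [].
        exact: (IHs s d sn).
      move=> t; split; first by move=> [x [Fx ->]]; split=> //; apply/TrS; exists x.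
      by move=> [_ /TrS [x [Fx ->]]]; exists x.
    by apply: hc_empty => t [].
  by move=> d d' t [_ [_ _ <-]] [_ [_ _ <-]].
  apply: IHs; exact: leq_subr.
move=> s s' ts [t [ts' [[_ e] _ ->]]] [t' [ts'' [[_ e'] _ E]]].
  by case: E => Et _; move: e'; rewrite -Et e; case.
Qed.

Lemma count_tree l m n (c : 'I_(l+m)) :
  has_card (Tr (Alm l m) c n.+1) (if c < l then Pn l m n else Qn l m n).
Proof.
apply: hc_ext.
  apply: (@hc_map _ _ _ _ (CNode c)); first by move=> x y [].
  exact: count_forest.
move=> t; split; first by move=> [x [Fx ->]]; apply/TrS; exists x.
by move/TrS.
Qed.

Lemma count_all l m n :
  has_card (fun t : ctree (l+m) => cvalid (Alm l m) t /\ csize t = n.+1)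
    (l * Pn l m n + m * Qn l m n).
Proof.
rewrite -(@color_sum l m (fun d => if d < l then Pn l m n else Qn l m n)); last first.
- by move=> d dl; rewrite ltnNge dl.
- by move=> d ->.
apply: hc_ext; first apply: hc_bigU (index_enum_uniq _) (fun d _ => count_tree n d) _.
  by move=> d d' t [_ _ <-] [_ _ <-].
move=> t; split; first by move=> [d _ [v e _]].
by move=> [v e]; exists (croot t); rewrite ?mem_index_enum.
Qed.

Import GRing.Theory Num.Theory.
Local Open Scope ring_scope.

Definition Xd (K : nat) (r : {poly rat}) := exists q, r = q * 'X^K.
Definition eqm K (p q : {poly rat}) := Xd K (p - q).

Lemma Xd_coef K r : Xd K r <-> forall i, (i < K)%N -> r`_i = 0.
Proof.
split.
  by move=> [q ->] i iK; rewrite coefMXn iK.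
move=> H; exists (drop_poly K r).
rewrite -{1}(poly_take_drop K r); suff -> : take_poly K r = 0 by rewrite add0r.
by apply/polyP => i; rewrite coef_take_poly coef0; case: ifP => // /H.
Qed.

Lemma Xd0 K : Xd K 0. Proof. by exists 0; rewrite mul0r. Qed.
Lemma XdD K p q : Xd K p -> Xd K q -> Xd K (p + q).
Proof. by move=> [a ->] [b ->]; exists (a + b); rewrite mulrDl. Qed.
Lemma XdN K p : Xd K p -> Xd K (- p).
Proof. by move=> [a ->]; exists (- a); rewrite mulNr. Qed.
Lemma XdMl K p s : Xd K p -> Xd K (s * p).
Proof. by move=> [a ->]; exists (s * a); rewrite mulrA. Qed.
Lemma XdMr K p s : Xd K p -> Xd K (p * s).
Proof. by move=> h; rewrite mulrC; apply: XdMl. Qed.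

Lemma eqm_refl K p : eqm K p p.
Proof. by rewrite /eqm subrr; apply: Xd0. Qed.
Lemma eqm_sym K p q : eqm K p q -> eqm K q p.
Proof. by rewrite /eqm => /XdN; rewrite opprB. Qed.
Lemma eqm_trans K p q r : eqm K p q -> eqm K q r -> eqm K p r.
Proof. by move=> h1 h2; have := XdD h1 h2; rewrite /eqm addrA subrK. Qed.
Lemma eqmD K p p' q q' : eqm K p p' -> eqm K q q' -> eqm K (p + q) (p' + q').
Proof.
move=> h1 h2; have := XdD h1 h2; rewrite /eqm.
by have -> : p + q - (p' + q') = p - p' + (q - q') by ring.
Qed.
Lemma eqmN K p p' : eqm K p p' -> eqm K (- p) (- p').
Proof. by move=> h; have := XdN h; rewrite /eqm opprB opprK addrC. Qed.
Lemma eqmB K p p' q q' : eqm K p p' -> eqm K q q' -> eqm K (p - q) (p' - q').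
Proof. by move=> h1 h2; apply: eqmD => //; apply: eqmN. Qed.
Lemma eqmM K p p' q q' : eqm K p p' -> eqm K q q' -> eqm K (p * q) (p' * q').
Proof.
move=> h1 h2; have := XdD (XdMr q h1) (XdMl p' h2); rewrite /eqm.
by have -> : p * q - p' * q' = (p - p') * q + p' * (q - q') by ring.
Qed.
Lemma eqmX K p p' k : eqm K p p' -> eqm K (p ^+ k) (p' ^+ k).
Proof.
move=> h; elim: k => [|k IH]; first exact: eqm_refl.
by rewrite !exprS; apply: eqmM.
Qed.
Lemma eqm_coef K (p q : {poly rat}) i : eqm K p q -> (i < K)%N -> p`_i = q`_i.
Proof. by move=> /Xd_coef h /h; rewrite coefB => /eqP; rewrite subr_eq0 => /eqP. Qed.
Lemma coef_eqm K (p q : {poly rat}) : (forall i, (i < K)%N -> p`_i = q`_i) -> eqm K p q.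
Proof. by move=> h; apply/Xd_coef => i /h; rewrite coefB => ->; rewrite subrr. Qed.
Lemma eqm_Xd K p : Xd K p -> eqm K p 0.
Proof. by rewrite /eqm subr0. Qed.

Lemma comp_polyXnr (p u : {poly rat}) k : (p ^+ k) \Po u = (p \Po u) ^+ k.
Proof.
elim: k => [|k IH]; first by rewrite !expr0 comp_polyC.
by rewrite !exprS comp_polyM IH.
Qed.

Lemma eqm_comp K p q (w : {poly rat}) :
  eqm K p q -> eqm K (p \Po ('X * w)) (q \Po ('X * w)).
Proof.
move=> [a e]; exists ((a \Po ('X * w)) * w ^+ K).
rewrite -comp_polyB e comp_polyM comp_polyXnr comp_polyX exprMn.
by ring.
Qed.

Lemma eqm_inv K a b d : eqm K (a * d) 1 -> eqm K (b * d) 1 -> eqm K a b.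
Proof.
move=> ha hb.
have h1 : eqm K a (a * (b * d)) by apply: eqm_sym; rewrite -{2}[a]mulr1; apply: eqmM (eqm_refl _ _) hb.
have h2 : eqm K (b * (a * d)) b by rewrite -{2}[b]mulr1; apply: eqmM (eqm_refl _ _) ha.
apply: eqm_trans h1 _; apply: eqm_trans h2.
have -> : a * (b * d) = b * (a * d) by ring.
exact: eqm_refl.
Qed.

Lemma sum_ext_zero (F : nat -> rat) a b : (a <= b)%N ->
  (forall i, (a <= i < b)%N -> F i = 0) -> \sum_(i < a) F i = \sum_(i < b) F i.
Proof.
move=> ab h; rewrite -(big_mkord xpredT F) -(big_mkord xpredT F) (big_cat_nat (leq0n a) ab) /=.
rewrite [X in _ + X]big1_seq ?addr0 // => i /andP [_]; rewrite mem_index_iota; exact: h.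
Qed.

Definition bL (phi : {poly rat}) n k : rat :=
  if k == 0%N then (n == 0%N)%:R else if (n < k)%N then 0
  else k%:R / n%:R * (phi ^+ n)`_(n - k).

Lemma key (phi : {poly rat}) k M : (0 < k)%N ->
  \sum_(i < size (phi ^+ k)) (phi ^+ k)`_i * bL phi M i
  = k%:R / (M + k)%:R * (phi ^+ (M + k))`_M.
Proof.
move=> k0; set p := phi ^+ k.
rewrite (@sum_ext_zero (fun i => p`_i * bL phi M i) (size p) (size p + M.+1)); last first.
- by move=> i /andP [hi _]; rewrite nth_default // mul0r.
- exact: leq_addr.
case: M => [|M].
  rewrite -(@sum_ext_zero (fun i => p`_i * bL phi 0 i) 1 (size p + 1)); last first.
  - by move=> i /andP [hi _]; rewrite /bL; case: i hi => [|i] //= _; rewrite mulr0.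
  - exact: leq_addl.
  rewrite big_ord1 /bL /= mulr1 divff ?mul1r //.
  by rewrite pnatr_eq0 -lt0n.
rewrite -(@sum_ext_zero (fun i => p`_i * bL phi M.+1 i) M.+2); last first.
- by move=> i /andP [hi _]; rewrite /bL; case: i hi => [|i] //= hi; rewrite ifT ?mulr0.
- exact: leq_addl.
have E1 : forall i : 'I_M.+2, p`_i * bL phi M.+1 i
    = ('X * p^`())`_i * (phi ^+ M.+1)`_(M.+1 - i) / M.+1%:R.
  move=> [[|i] hi] /=; first by rewrite /bL /= mulr0 coefXM /= !mul0r.
  rewrite /bL /= ltnNge -ltnS hi /= coefXM /= coef_deriv.
  by rewrite -mulr_natr; ring.
rewrite (eq_bigr _ (fun i _ => E1 i)) -mulr_suml -coefM.
have E : 'X * p^`() * phi ^+ M.+1 = ('X * (phi^`() * phi ^+ (M.+1 + k).-1)) *+ k.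
  rewrite /p deriv_exp; have -> : (M.+1 + k).-1 = (k.-1 + M.+1)%N by lia.
  by rewrite exprD; ring.
have E2 : (phi ^+ (M.+1 + k))^`() = (phi^`() * phi ^+ (M.+1 + k).-1) *+ (M.+1 + k).
  by rewrite deriv_exp.
rewrite E coefMn coefXM /=.
have E3 : ((phi ^+ (M.+1 + k))^`())`_M = (phi^`() * phi ^+ (M.+1 + k).-1)`_M *+ (M.+1 + k).
  by rewrite E2 coefMn.
move: E3; rewrite coef_deriv => E3.
have nz : (M.+1 + k)%:R != 0 :> rat by rewrite pnatr_eq0 addSn.
have nz2 : M.+1%:R != 0 :> rat by rewrite pnatr_eq0.
set c := (phi^`() * phi ^+ (M.+1 + k).-1)`_M in E3 *.
set d := (phi ^+ (M.+1 + k))`_M.+1 in E3 *.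
have -> : c = d *+ M.+1 / (M.+1 + k)%:R.
  by rewrite E3 -[c *+ _]mulr_natr mulfK.
rewrite -[d *+ _]mulr_natr -[_ *+ k]mulr_natr.
have h1 : (1 + M%:R + k%:R : rat) = (M.+1 + k)%:R by rewrite -add1n !natrD.
have h2 : (1 + M%:R : rat) = (M.+1)%:R by rewrite -add1n !natrD.
by field; rewrite h1 h2 nz nz2.
Qed.

Lemma lagr K (phi w : {poly rat}) :
  eqm K ('X * w) ('X * (phi \Po ('X * w))) ->
  forall n k, (n < K)%N -> (('X * w) ^+ k)`_n = bL phi n k.
Proof.
move=> hu n; elim: n {-2}n (leqnn n) => [|N IH] n hn k nK.
  move: hn; rewrite leqn0 => /eqP ->.
  rewrite /bL; case: k => [|k] /=; first by rewrite expr0 coef1.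
  by rewrite exprMn coefXnM.
case: k => [|k].
  by rewrite expr0 coef1 /bL.
have [nk|kn] := ltnP n k.+1.
  by rewrite exprMn coefXnM nk /bL /= nk.
rewrite (eqm_coef (eqmX k.+1 hu) nK) exprMn -comp_polyXnr coefXnM ltnNge kn /=.
rewrite coef_comp_poly.
have nkn : (n - k.+1 <= N)%N by lia.
rewrite (eq_bigr (fun i : 'I_(size (phi ^+ k.+1)) => (phi ^+ k.+1)`_i * bL phi (n - k.+1)%N i)); last first.
  move=> i _; rewrite IH //; apply: leq_ltn_trans (leq_subr _ _) nK.
rewrite key // subnK // /bL /= ltnNge kn /=.
done.
Qed.

Definition Pp l m K : {poly rat} := \poly_(i < K) (Pn l m i)%:R.
Definition Qp l m K : {poly rat} := \poly_(i < K) (Qn l m i)%:R.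
Definition Lc (l : nat) : {poly rat} := (l%:R)%:P.
Definition Qt l m K : {poly rat} := \poly_(j < K) (l%:R + m%:R * j%:R).

Lemma R1 l m K : eqm K (Pp l m K)
  (1 + 'X * ((Lc l * Pp l m K + Lc m * Qp l m K) * Pp l m K)).
Proof.
apply: coef_eqm => i iK; rewrite coefD coef1 coefXM coef_poly iK.
case: i iK => [|j] jK /=; first by rewrite addr0.
rewrite add0r coefM PnS natr_sum; apply: eq_bigr => s _.
have sK : (s < K)%N by have := ltn_ord s; lia.
have jsK : (j - s < K)%N by lia.
by rewrite coefD !coefCM !coef_poly sK jsK natrM natrD !natrM.
Qed.

Lemma R2 l m K : eqm K (Qp l m K) (1 + 'X * ((Lc l * Pp l m K) * Qp l m K)).
Proof.
apply: coef_eqm => i iK; rewrite coefD coef1 coefXM coef_poly iK.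
case: i iK => [|j] jK /=; first by rewrite addr0.
rewrite add0r coefM QnS natr_sum; apply: eq_bigr => s _.
have sK : (s < K)%N by have := ltn_ord s; lia.
have jsK : (j - s < K)%N by lia.
by rewrite !coefCM !coef_poly sK jsK !natrM.
Qed.

Lemma Qt_eq l m K : eqm K (Qt l m K * (1 - 'X) ^+ 2) (Lc l + (Lc m - Lc l) * 'X).
Proof.
apply: coef_eqm => i iK.
have -> : Qt l m K * (1 - 'X) ^+ 2 = Qt l m K - ('X * Qt l m K) *+ 2 + 'X * ('X * Qt l m K) by ring.
rewrite coefD coefB coefMn !coefXM coefD coefMX /Lc -polyCB !coefC !coef_poly.
case: i iK => [|[|j]] jK /=.
- by rewrite jK; ring.
- by rewrite jK (ltnW jK); ring.
rewrite jK (ltnW jK) (ltnW (ltnW jK)).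
rewrite -[j.+2]addn2 -[j.+1]addn1 !natrD; ring.
Qed.

Lemma alg_id (X P Q S L M : {poly rat}) :
  let u := X * (L * P) in
  u - X * S =
    ((1 - u) * L * X * Q ^+ 2) * (P - (1 + X * ((L * P + M * Q) * P)))
  + (u * M * X * Q ^+ 2 - (u - X * S) * (Q * (1 - u) + 1)) * (Q - (1 + X * ((L * P) * Q)))
  + (- (X * Q ^+ 2)) * (S * (1 - u) ^+ 2 - (L + (M - L) * u)).
Proof. rewrite /=; ring. Qed.

Lemma comp_poly1 (u : {poly rat}) : 1 \Po u = 1.
Proof. by rewrite -polyC1 comp_polyC. Qed.

Lemma u_eq l m K :
  eqm K ('X * (Lc l * Pp l m K)) ('X * (Qt l m K \Po ('X * (Lc l * Pp l m K)))).
Proof.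
have h1 := R1 l m K; have h2 := R2 l m K.
have h3 := eqm_comp (Lc l * Pp l m K) (Qt_eq l m K).
rewrite comp_polyM comp_polyXnr comp_polyB comp_poly1 comp_polyX comp_polyD comp_polyM
  comp_polyB /Lc !comp_polyC comp_polyX -/(Lc l) -/(Lc m) in h3.
rewrite /eqm (alg_id _ _ (Qp l m K) _ _ (Lc m)).
by apply: XdD; [apply: XdD|]; apply: XdMl.
Qed.

Lemma u_coef l m K n : (0 < n)%N -> (n < K)%N ->
  (l * Pn l m n.-1)%:R = n%:R^-1 * (Qt l m K ^+ n)`_(n.-1) :> rat.
Proof.
move=> n0 nK; have := @lagr _ _ _ (u_eq l m K) n 1 nK.
rewrite expr1 coefXM /bL /=; case: n n0 nK => // n _ nK /=.
rewrite coefCM coef_poly (ltnW nK) natrM /= => ->.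
by rewrite subn1 mul1r.
Qed.

Lemma geom (u : {poly rat}) N : (\sum_(k < N) u ^+ k) * (1 - u) = 1 - u ^+ N.
Proof.
elim: N => [|N IH]; first by rewrite big_ord0 mul0r expr0 subrr.
by rewrite big_ord_recr /= mulrDl IH exprS; ring.
Qed.

Lemma Q_coef l m K j : (j < K)%N ->
  (Qn l m j)%:R = \sum_(k < K) bL (Qt l m K) j k :> rat.
Proof.
move=> jK.
set u := 'X * (Lc l * Pp l m K).
have e : eqm K (Qp l m K) (\sum_(k < K) u ^+ k).
  apply: (@eqm_inv _ _ _ (1 - u)).
    have h2 := R2 l m K; rewrite /eqm.
    have -> : Qp l m K * (1 - u) - 1 = Qp l m K - (1 + 'X * ((Lc l * Pp l m K) * Qp l m K)).
      by rewrite /u; ring.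
    exact: h2.
  rewrite /eqm geom; exists (- (Lc l * Pp l m K) ^+ K).
  by rewrite /u exprMn; ring.
have := eqm_coef e jK; rewrite coef_poly jK => ->.
rewrite coef_sum; apply: eq_bigr => k _.
exact: (@lagr _ _ _ (u_eq l m K) j k jK).
Qed.

Definition Rs (e K : nat) : {poly rat} := \poly_(j < K) ('C((e + j).-1, j))%:R.
Definition Lb (l m : nat) : {poly rat} := Lc l + (Lc m - Lc l) * 'X.

Lemma Rs_step e K : eqm K (Rs e.+1 K * (1 - 'X)) (Rs e K).
Proof.
apply: coef_eqm => j jK.
rewrite mulrBr mulr1 coefB coefMX !coef_poly jK.
case: j jK => [|j] jK /=; first by rewrite !bin0 subr0.
rewrite (ltnW jK).
have e3 : (e + j.+1).-1 = (e + j)%N by lia.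
rewrite e3 addnS binS natrD; ring.
Qed.

Lemma Rs_inv e K : eqm K (Rs e K * (1 - 'X) ^+ e) 1.
Proof.
elim: e => [|e IH].
  rewrite expr0 mulr1; apply: coef_eqm => j jK.
  rewrite coef_poly jK coef1 add0n; case: j {jK} => [|j] //=.
  by rewrite bin_small.
rewrite exprS mulrA; apply: eqm_trans IH.
by apply: eqmM (Rs_step e K) (eqm_refl _ _).
Qed.

Lemma Rs_mul a b K : eqm K (Rs a K * Rs b K) (Rs (a + b) K).
Proof.
apply: (@eqm_inv _ _ _ ((1 - 'X) ^+ (a + b))); last exact: (Rs_inv (a + b) K).
have -> : Rs a K * Rs b K * (1 - 'X) ^+ (a + b)
  = (Rs a K * (1 - 'X) ^+ a) * (Rs b K * (1 - 'X) ^+ b) by rewrite exprD; ring.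
by have := eqmM (Rs_inv a K) (Rs_inv b K); rewrite mulr1.
Qed.

Lemma Qt_Lb l m K : eqm K (Qt l m K) (Lb l m * Rs 2 K).
Proof.
apply: coef_eqm => j jK.
have -> : Lb l m * Rs 2 K = Lc l * Rs 2 K + (Lc m - Lc l) * ('X * Rs 2 K) by rewrite /Lb; ring.
rewrite coefD /Lc -polyCB !coefCM coefXM !coef_poly jK.
case: j jK => [|j] jK /=; first by rewrite bin0; ring.
rewrite (ltnW jK) !add1n !binSn.
rewrite -[j.+2]addn2 -[j.+1]addn1 !natrD; ring.
Qed.


Lemma Qt_pow l m K N : eqm K (Qt l m K ^+ N) (Lb l m ^+ N * Rs (2 * N) K).
Proof.
apply: eqm_trans (eqmX N (Qt_Lb l m K)) _.
rewrite exprMn; apply: eqmM; first exact: eqm_refl.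
elim: N => [|N IH].
  by rewrite expr0 muln0; apply: eqm_sym; apply: (eqm_trans _ (Rs_inv 0 K)); rewrite expr0 mulr1; exact: eqm_refl.
rewrite exprSr; apply: eqm_trans (eqmM IH (eqm_refl _ (Rs 2 K))) _.
by rewrite mulnS addnC; apply: Rs_mul.
Qed.

Lemma Lb_pow l m N :
  Lb l m ^+ N = \poly_(i < N.+1) ('C(N, i)%:R * l%:R ^+ (N - i) * (m%:R - l%:R) ^+ i).
Proof.
rewrite /Lb exprDn poly_def; apply: eq_bigr => i _.
rewrite /Lc -polyCB exprMn -!polyC_exp -mul_polyC !polyCM polyC_natr.
by rewrite -mulr_natl; ring.
Qed.

Definition CF (l m N e : nat) : rat :=
  \sum_(i < N) 'C(N, i)%:R * l%:R ^+ (N - i) * (m%:R - l%:R) ^+ i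
     * 'C((e + (N.-1 - i)).-1, (N.-1 - i))%:R.

Lemma coef_LbRs l m K N e : (0 < N)%N -> (N <= K)%N ->
  (Lb l m ^+ N * Rs e K)`_(N.-1) = CF l m N e.
Proof.
move=> N0 NK; rewrite coefM prednK //; apply: eq_bigr => i _.
rewrite Lb_pow !coef_poly ltnS (ltnW (ltn_ord i)).
have -> : (N.-1 - i < K)%N by lia.
done.
Qed.

Lemma P_CF l m n K : (0 < n)%N -> (n < K)%N ->
  (l * Pn l m n.-1)%:R = n%:R^-1 * CF l m n (2 * n) :> rat.
Proof.
move=> n0 nK; rewrite (u_coef l m n0 nK).
rewrite (eqm_coef (Qt_pow l m K n)); last by lia.
by rewrite coef_LbRs //; apply: ltnW.
Qed.

Lemma Q_CF l m N K : (0 < N)%N -> (N < K)%N ->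
  (Qn l m N)%:R = N%:R^-1 * CF l m N (2 * N + 2) :> rat.
Proof.
move=> N0 NK; rewrite (Q_coef l m NK).
rewrite -(@sum_ext_zero (fun k => bL (Qt l m K) N k) N.+1 K); last first.
- by move=> k /andP [hk _]; rewrite /bL; case: k hk => //= k hk; rewrite ifT.
- exact: NK.
have E : forall k : 'I_N.+1, bL (Qt l m K) N k
    = N%:R^-1 * (('X * Rs 2 K)`_k * (Qt l m K ^+ N)`_(N - k)).
  move=> [[|k] hk] /=.
    by rewrite /bL /= coefXM /= mul0r mulr0; case: N N0 {NK hk}.
  rewrite /bL /= ltnNge -ltnS hk /= coefXM /= coef_poly.
  have -> : (k < K)%N by lia.
  rewrite add2n /= binSn; ring.
rewrite (eq_bigr _ (fun k _ => E k)) -mulr_sumr -coefM -mulrA coefXM.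
case: N N0 NK {E} => // N _ NK /=.
rewrite (eqm_coef (eqmM (eqm_refl K (Rs 2 K)) (Qt_pow l m K N.+1))); last by lia.
rewrite mulrA (mulrC (Rs 2 K)) -mulrA.
rewrite (eqm_coef (eqmM (eqm_refl K (Lb l m ^+ N.+1)) (Rs_mul 2 (2 * N.+1) K))); last by lia.
rewrite [(2 + _)%N]addnC (@coef_LbRs l m K N.+1 (2 * N.+1 + 2)) //. exact: ltnW NK.
Qed.

Lemma reindex (F : nat -> rat) n : \sum_(i < n) F i = \sum_(1 <= k < n.+1) F (n - k)%N.
Proof.
elim: n => [|n IH]; first by rewrite big_ord0 big_geq.
by rewrite big_ord_recr /= IH big_nat_recl // subn1 /= addrC.
Qed.

Lemma S1_eq l m n : (0 < n)%N ->
  CF l m n (2 * n) = \sum_(1 <= k < n.+1)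
     ((m%:R - l%:R) ^+ (n - k) * (l%:R) ^+ k * ('C(n, k))%:R * ('C(2 * n + k - 2, k - 1))%:R).
Proof.
move=> n0; rewrite /CF (reindex (fun i => 'C(n, i)%:R * l%:R ^+ (n - i) * (m%:R - l%:R) ^+ i
     * 'C((2 * n + (n.-1 - i)).-1, (n.-1 - i))%:R)).
apply: eq_big_nat => k /andP [k1 kn].
have e1 : (n - (n - k) = k)%N by lia.
have e2 : (n.-1 - (n - k) = k - 1)%N by lia.
have e3 : ((2 * n + (k - 1)).-1 = 2 * n + k - 2)%N by lia.
rewrite e1 e2 e3 bin_sub; last by lia.
ring.
Qed.

Lemma S2_eq l m n : (1 < n)%N ->
  CF l m (n - 1) (2 * (n - 1) + 2) = \sum_(1 <= k < n)
     ((m%:R - l%:R) ^+ (n - k - 1) * (l%:R) ^+ k * ('C(n - 1, k))%:R * ('C(2 * n + k - 2, k - 1))%:R).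
Proof.
move=> n1; rewrite /CF (reindex (fun i => 'C(n - 1, i)%:R * l%:R ^+ (n - 1 - i) * (m%:R - l%:R) ^+ i
     * 'C((2 * (n - 1) + 2 + ((n - 1).-1 - i)).-1, ((n - 1).-1 - i))%:R)).
have -> : (n - 1).+1 = n by lia.
apply: eq_big_nat => k /andP [k1 kn].
have e1 : (n - 1 - (n - 1 - k) = k)%N by lia.
have e2 : ((n - 1).-1 - (n - 1 - k) = k - 1)%N by lia.
have e3 : ((2 * (n - 1) + 2 + (k - 1)).-1 = 2 * n + k - 2)%N by lia.
have e4 : (n - 1 - k = n - k - 1)%N by lia.
rewrite e1 e2 e3 bin_sub; last by lia.
rewrite e4; ring.
Qed.

Lemma term_id (l m n k : nat) : (1 <= k)%N -> (k < n)%N ->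
 ((((2 * m)%:R - l%:R) * n%:R - m%:R * k%:R + (l%:R - m%:R)) / (n%:R * (n - 1)%:R)
    * (m%:R - l%:R) ^+ (n - k - 1) * (l%:R) ^+ k * ('C(n, k))%:R * ('C(2 * n + k - 2, k - 1))%:R : rat)
 = n%:R^-1 * ((m%:R - l%:R) ^+ (n - k) * (l%:R) ^+ k * ('C(n, k))%:R * ('C(2 * n + k - 2, k - 1))%:R)
   + m%:R * ((n - 1)%:R^-1 * ((m%:R - l%:R) ^+ (n - k - 1) * (l%:R) ^+ k * ('C(n - 1, k))%:R
       * ('C(2 * n + k - 2, k - 1))%:R)).
Proof.
move=> k1 kn.
have hb : ('C(n - 1, k)%:R = (n%:R - k%:R) * 'C(n, k)%:R / n%:R :> rat).
  have nz : n%:R != 0 :> rat by rewrite pnatr_eq0; lia.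
  apply: (mulIf nz); rewrite mulrC divfK // -natrB; last by lia.
  by rewrite -!natrM subn1 mul_bin_down.
have ex : (m%:R - l%:R) ^+ (n - k) = (m%:R - l%:R) * (m%:R - l%:R) ^+ (n - k - 1) :> rat.
  by rewrite -exprS; congr (_ ^+ _); lia.
have n1 : (n - 1)%:R = n%:R - 1 :> rat by rewrite natrB //; lia.
rewrite hb ex n1 natrM.
have nz : n%:R != 0 :> rat by rewrite pnatr_eq0; lia.
have nz1 : n%:R - 1 != 0 :> rat by rewrite -n1 pnatr_eq0; lia.
by field; rewrite nz nz1.
Qed.
Unset Implicit Arguments.

Theorem theorem35 (l m n : nat) :
  (0 < l)%N -> (0 < m)%N -> (0 < n)%N ->
  [/\ (forall i : 'I_(l + m), (i < l)%N ->
         exists N : nat, tAi_is (Alm l m) i n N /\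
           (N%:R : rat) = (n%:R)^-1 *
             \sum_(1 <= k < n.+1)
               ((m%:R - l%:R) ^+ (n - k) * (l%:R) ^+ (k - 1)
                * ('C(n, k))%:R * ('C(2 * n + k - 2, k - 1))%:R)),
      (1 < n)%N -> forall i : 'I_(l + m), (l <= i)%N ->
         exists N : nat, tAi_is (Alm l m) i n N /\
           (N%:R : rat) = ((n - 1)%:R)^-1 *
             \sum_(1 <= k < n)
               ((m%:R - l%:R) ^+ (n - k - 1) * (l%:R) ^+ k
                * ('C(n - 1, k))%:R * ('C(2 * n + k - 2, k - 1))%:R) &
      (1 < n)%N ->
         exists N : nat, tA_is (Alm l m) n N /\
           (N%:R : rat) =
             \sum_(1 <= k < n)
               ((((2 * m)%:R - l%:R) * n%:R - m%:R * k%:R + (l%:R - m%:R))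
                  / (n%:R * (n - 1)%:R)
                * (m%:R - l%:R) ^+ (n - k - 1) * (l%:R) ^+ k
                * ('C(n, k))%:R * ('C(2 * n + k - 2, k - 1))%:R)
             + (n - 1)%:R / (n%:R * (n - 1)%:R)
                * (l%:R) ^+ n * ('C(n, n))%:R * ('C(2 * n + n - 2, n - 1))%:R].
Proof.
move=> l0 m0 n0; split.
- move=> i il; exists (Pn l m n.-1); split.
    by have := @count_tree l m n.-1 i; rewrite il prednK.
  have lz : l%:R != 0 :> rat by rewrite pnatr_eq0 -lt0n.
  apply: (mulfI lz); rewrite -natrM (@P_CF l m n n.+1 n0 (ltnSn n)) S1_eq // mulrCA.
  congr (_ * _); rewrite mulr_sumr; apply: eq_big_nat => k /andP [k1 _].
  have el : l%:R ^+ k = l%:R * l%:R ^+ (k - 1) :> rat by rewrite -exprS; congr (_ ^+ _); lia.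
  by rewrite el; ring.
- move=> n1 i il; exists (Qn l m (n - 1)); split.
    have := @count_tree l m (n - 1) i; rewrite ltnNge il /=.
    by have -> : (n - 1).+1 = n by lia.
  rewrite (@Q_CF l m (n - 1) n); [|lia|lia].
  by rewrite S2_eq.
move=> n1; exists (l * Pn l m (n - 1) + m * Qn l m (n - 1))%N; split.
  have := @count_all l m (n - 1).
  by have -> : (n - 1).+1 = n by lia.
have hP : l%:R * (Pn l m (n - 1))%:R = n%:R^-1 * \sum_(1 <= k < n.+1)
     ((m%:R - l%:R) ^+ (n - k) * (l%:R) ^+ k * ('C(n, k))%:R * ('C(2 * n + k - 2, k - 1))%:R) :> rat.
  by rewrite -natrM subn1 (@P_CF l m n n.+1 n0 (ltnSn n)) S1_eq.
have hQ : (Qn l m (n - 1))%:R = (n - 1)%:R^-1 * \sum_(1 <= k < n)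
     ((m%:R - l%:R) ^+ (n - k - 1) * (l%:R) ^+ k * ('C(n - 1, k))%:R * ('C(2 * n + k - 2, k - 1))%:R) :> rat.
  by rewrite (@Q_CF l m (n - 1) n); [rewrite S2_eq|lia|lia].
have HS : \sum_(1 <= k < n)
               ((((2 * m)%:R - l%:R) * n%:R - m%:R * k%:R + (l%:R - m%:R))
                  / (n%:R * (n - 1)%:R)
                * (m%:R - l%:R) ^+ (n - k - 1) * (l%:R) ^+ k
                * ('C(n, k))%:R * ('C(2 * n + k - 2, k - 1))%:R)
  = n%:R^-1 * \sum_(1 <= k < n)
     ((m%:R - l%:R) ^+ (n - k) * (l%:R) ^+ k * ('C(n, k))%:R * ('C(2 * n + k - 2, k - 1))%:R)
    + m%:R * ((n - 1)%:R^-1 * \sum_(1 <= k < n)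
     ((m%:R - l%:R) ^+ (n - k - 1) * (l%:R) ^+ k * ('C(n - 1, k))%:R * ('C(2 * n + k - 2, k - 1))%:R)) :> rat.
  rewrite !mulr_sumr -big_split; apply: eq_big_nat => k /andP [k1 kn].
  exact: term_id.
rewrite natrD natrM hP natrM hQ HS.
rewrite big_nat_recr /=; last by lia.
rewrite subnn expr0 binn.
have nz : n%:R != 0 :> rat by rewrite pnatr_eq0; lia.
have nz1 : (n - 1)%:R != 0 :> rat by rewrite pnatr_eq0; lia.
field.
by rewrite nz nz1.
Qed.
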